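(* For each positive integer $\ell$ let $k_\ell>0$, and suppose $\lim_{\ell\to\infty}\ell e^{-\delta k_\ell}=0$ for every $\delta>0$. Let $A>0$, $B>0$, $\bar w\ge1$ be constants. Let $\{a_\ell\}$, $\{b_\ell\}$ be sequences with $b_\ell\le a_\ell$, $\lim_{\ell\to\infty}k_\ell/a_\ell=a\in[0,\infty)$ and $\lim_{\ell\to\infty}k_\ell/b_\ell=b\in(0,\infty)$, and let $\{A_\ell\}$ satisfy $\liminf_{\ell\to\infty}A_\ell=A$. Define on $[0,a_\ell]$ $$h_\ell(w)=A_\ell\log(1+Bw)-\frac{a_\ell}{k_\ell}H_2\Big(\frac w{a_\ell}\Big).$$ Let $w_\ell^*$ be a point achieving the global minimum of $h_\ell$ restricted to $[\bar w,b_\ell]$. Then for all sufficiently large $\ell$, either $w_\ell^*=\bar w$ or $w_\ell^*\in[cb_\ell,b_\ell]$, where $c=\min\Big\{\frac{bA}{64(1+Aa)},1\Big\}$.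
   Context: Logarithms are natural; $H_2(p)=-p\log p-(1-p)\log(1-p)$ for $p\in[0,1]$. *)

(* Defs.v *)
From Stdlib Require Import Reals.
Open Scope R_scope.

(* Binary entropy with natural log. Stdlib's [ln] satisfies [ln 0 = 0],
   so [0 * ln 0 = 0], matching the convention 0 log 0 = 0. *)
Definition H2 (p : R) : R := - (p * ln p) - (1 - p) * ln (1 - p).

Definition h_fun (Al B al kl w : R) : R :=
  Al * ln (1 + B * w) - (al / kl) * H2 (w / al).

Definition liminf_eq (u : nat -> R) (L : R) : Prop :=
  forall eps, 0 < eps ->
    (exists N, forall n, (N <= n)%nat -> L - eps < u n) /\
    (forall N, exists n, (N <= n)%nat /\ u n < L + eps).

(* Main.v *)
Require Import Defs.
From Stdlib Require Import Reals Lra Lia.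
From Coquelicot Require Import Coquelicot.
Open Scope R_scope.

Definition h1 (Al B al K w : R) : R :=
  Al*B/(1+B*w) - (1/K)*(ln (1 - w/al) - ln (w/al)).
Definition h2 (Al B al K w : R) : R :=
  - (Al*(B*B)/((1+B*w)*(1+B*w))) + (1/K)*(1/(al-w) + 1/w).

Lemma dh (Al B al K w : R) : 0 < K -> 0 < B -> 0 < w < al ->
  derivable_pt_lim (h_fun Al B al K) w (h1 Al B al K w).
Proof.
  intros HK HB [Hw Hwa].
  apply is_derive_Reals.
  unfold h_fun, H2, h1.
  assert (0 < al) by lra.
  assert (0 < w/al) by (apply Rdiv_lt_0_compat; lra).
  assert (0 < 1 - w/al).
  { assert (w/al < 1). { apply Rmult_lt_reg_r with al; [lra|]. unfold Rdiv. rewrite Rmult_assoc, Rinv_l; lra. } lra. }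
  auto_derive.
  - repeat split; nra.
  - unfold Rminus, Rdiv. field. repeat split; nra.
Qed.

Lemma dh1 (Al B al K w : R) : 0 < K -> 0 < B -> 0 < w < al ->
  derivable_pt_lim (h1 Al B al K) w (h2 Al B al K w).
Proof.
  intros HK HB [Hw Hwa].
  apply is_derive_Reals.
  unfold h1, h2.
  assert (0 < al) by lra.
  assert (0 < w/al) by (apply Rdiv_lt_0_compat; lra).
  assert (0 < 1 - w/al).
  { assert (w/al < 1). { apply Rmult_lt_reg_r with al; [lra|]. unfold Rdiv. rewrite Rmult_assoc, Rinv_l; lra. } lra. }
  auto_derive.
  - repeat split; nra.
  - unfold Rminus, Rdiv. field. repeat split; nra.
Qed.

Lemma core (Al B al K wbar z ws : R) : 0 < K -> 0 < B -> 0 < wbar -> wbar < ws < z -> z < al ->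
  (forall w, wbar <= w <= z -> h2 Al B al K w < 0) ->
  h_fun Al B al K ws <= h_fun Al B al K wbar ->
  h_fun Al B al K ws <= h_fun Al B al K z -> False.
Proof.
  intros HK HB Hwb [H1 H2] Hz Hneg Ha Hb.
  destruct (MVT_cor2 (h_fun Al B al K) (h1 Al B al K) wbar ws H1) as [c2 [E2 Hc2]].
  { intros c Hc. apply dh; lra. }
  destruct (MVT_cor2 (h_fun Al B al K) (h1 Al B al K) ws z H2) as [c1 [E1 Hc1]].
  { intros c Hc. apply dh; lra. }
  assert (h1 Al B al K c2 <= 0) by nra.
  assert (h1 Al B al K c1 >= 0) by nra.
  assert (Hlt : c2 < c1) by lra.
  destruct (MVT_cor2 (h1 Al B al K) (h2 Al B al K) c2 c1 Hlt) as [c3 [E3 Hc3]].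
  { intros c Hc. apply dh1; lra. }
  assert (h2 Al B al K c3 < 0) by (apply Hneg; lra).
  nra.
Qed.

Lemma h2neg (Al B al K w A : R): 0<A -> 0<B -> 0<K -> A/2 < Al -> 1 <= w ->
  w < A*K/32 -> w < al/2 -> A*(B*B)*K >= 16 -> h2 Al B al K w < 0.
Proof.
  intros HA HB HK HAl Hw Hw1 Hw2 HK2.
  unfold h2.
  assert (Hq : 0 < 1 + B*w) by nra.
  assert (Hkey : 2 * ((1+B*w)*(1+B*w)) < Al*(B*B)*K*w).
  { destruct (Rle_or_lt 1 (B*w)) as [Hb|Hb].
    - assert ((1+B*w)*(1+B*w) <= 4*((B*w)*(B*w))) by nra.
      assert (16 * w < A*K) by lra.
      assert (A/2*(B*B)*K*w < Al*(B*B)*K*w).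
      { apply Rmult_lt_compat_r; [lra|]. apply Rmult_lt_compat_r; [lra|].
        apply Rmult_lt_compat_r; nra. }
      assert (8*((B*w)*(B*w)) <= A/2*(B*B)*K*w).
      { assert (0 < B*B*w) by nra. nra. }
      lra.
    - assert ((1+B*w)*(1+B*w) < 4) by nra.
      assert (A/2*(B*B)*K*w < Al*(B*B)*K*w).
      { apply Rmult_lt_compat_r; [lra|]. apply Rmult_lt_compat_r; [lra|].
        apply Rmult_lt_compat_r; nra. }
      assert (8 <= A/2*(B*B)*K*w) by nra.
      lra. }
  assert (Hs : 1/(al-w) + 1/w <= 2/w).
  { assert (1/(al-w) <= 1/w).
    { apply Rmult_le_reg_r with ((al-w)*w); [apply Rmult_lt_0_compat; lra|].
      replace (1/(al-w)*((al-w)*w)) with w by (field; lra).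
      replace (1/w*((al-w)*w)) with (al-w) by (field; lra). lra. }
    unfold Rdiv in *. lra. }
  assert (1/K*(1/(al-w) + 1/w) <= 1/K*(2/w)).
  { apply Rmult_le_compat_l; [ unfold Rdiv; rewrite Rmult_1_l; left; apply Rinv_0_lt_compat; lra | lra]. }
  assert (1/K*(2/w) < Al*(B*B)/((1+B*w)*(1+B*w))).
  { apply Rmult_lt_reg_r with (K*w*((1+B*w)*(1+B*w))); [apply Rmult_lt_0_compat; [apply Rmult_lt_0_compat; lra|apply Rmult_lt_0_compat; lra]|].
    replace (1/K*(2/w)*(K*w*((1+B*w)*(1+B*w)))) with (2*((1+B*w)*(1+B*w))) by (field; lra).
    replace (Al*(B*B)/((1+B*w)*(1+B*w))*(K*w*((1+B*w)*(1+B*w)))) with (Al*(B*B)*K*w) by (field; lra).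
    lra. }
  lra.
Qed.

Theorem lemma7
  (k : nat -> R) (A B wbar : R) (av bv AA : nat -> R) (a b : R) (w : nat -> R) :
  (forall l, (1 <= l)%nat -> 0 < k l) ->
  (forall delta, 0 < delta -> Un_cv (fun l => INR l * exp (- delta * k l)) 0) ->
  0 < A -> 0 < B -> 1 <= wbar ->
  (forall l, (1 <= l)%nat -> bv l <= av l) ->
  0 <= a -> Un_cv (fun l => k l / av l) a ->
  0 < b -> Un_cv (fun l => k l / bv l) b ->
  liminf_eq AA A ->
  (* w l is a global minimizer of h_l on [wbar, b_l] (whenever that interval is nonempty) *)
  (forall l, (1 <= l)%nat -> wbar <= bv l ->
     wbar <= w l <= bv l /\
     forall v, wbar <= v <= bv l ->
       h_fun (AA l) B (av l) (k l) (w l) <= h_fun (AA l) B (av l) (k l) v) ->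
  exists N, forall l, (N <= l)%nat ->
    w l = wbar \/
    Rmin (b * A / (64 * (1 + A * a))) 1 * bv l <= w l <= bv l.
Proof.
  intros Hk Hexp HA HB Hwb Hba Ha Hcva Hb Hcvb Hlim Hmin.
  set (c0 := b * A / (64 * (1 + A * a))).
  set (K0 := Rmax (2*b*wbar) (16/(A*(B*B))) + 1).
  destruct (proj1 (Hlim (A/2) ltac:(lra))) as [N1 HN1].
  destruct (Hcvb (b/2) ltac:(lra)) as [N2 HN2].
  destruct (Hcva (/A) ltac:(apply Rinv_0_lt_compat; lra)) as [N3 HN3].
  destruct (Hexp 1 ltac:(lra) (exp (-K0)) (exp_pos _)) as [N4 HN4].
  exists (S (N1 + N2 + N3 + N4)).
  intros l Hl.
  assert (Hl1 : (1 <= l)%nat) by lia.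
  specialize (HN1 l ltac:(lia)). specialize (HN2 l ltac:(lia)).
  specialize (HN3 l ltac:(lia)). specialize (HN4 l ltac:(lia)).
  set (K := k l) in *. set (bl := bv l) in *. set (al := av l) in *. set (Al := AA l) in *.
  assert (HK : 0 < K) by (apply Hk; lia).
  assert (HKK0 : K0 < K).
  { unfold R_dist in HN4. rewrite Rminus_0_r in HN4.
    assert (1 <= INR l) by (apply (le_INR 1); lia).
    replace (- (1) * K) with (- K) in HN4 by ring.
    assert (0 < exp (-K)) by apply exp_pos.
    rewrite Rabs_right in HN4 by nra.
    assert (exp (-K) < exp (-K0)) by nra.
    apply exp_lt_inv in H1. lra. }
  assert (HK1 : 2*b*wbar < K).
  { assert (2*b*wbar <= Rmax (2*b*wbar) (16/(A*(B*B)))) by apply Rmax_l. unfold K0 in HKK0. lra. }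
  assert (HK2 : 16 <= A*(B*B)*K).
  { assert (16/(A*(B*B)) <= Rmax (2*b*wbar) (16/(A*(B*B)))) by apply Rmax_r. unfold K0 in HKK0.
    assert (0 < A*(B*B)) by (apply Rmult_lt_0_compat; nra).
    assert (16/(A*(B*B)) * (A*(B*B)) = 16) by (field; lra).
    nra. }
  unfold R_dist in HN2, HN3.
  apply Rabs_def2 in HN2. apply Rabs_def2 in HN3.
  assert (Hbl : 0 < bl).
  { destruct (Rtotal_order bl 0) as [H|[H|H]]; auto.
    - assert (/bl < 0) by (apply Rinv_lt_0_compat; lra).
      assert (K / bl < 0) by (unfold Rdiv; nra). lra.
    - unfold Rdiv in HN2. rewrite H, Rinv_0 in HN2. lra. }
  assert (HKbl : K = K/bl * bl) by (field; lra).
  assert (Hbl1 : b * bl < 2 * K) by nra.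
  assert (Hbl2 : 2 * K < 3 * b * bl) by nra.
  assert (Hwbl : wbar <= bl) by nra.
  assert (Hal : 0 < al) by (pose proof (Hba l Hl1); fold bl al in H; lra).
  assert (HKal : K = K/al * al) by (field; lra).
  assert (Hal1 : A * K < al * (A*a+1)).
  { assert (K < al * (a + /A)) by nra.
    assert (A * (al * (a + /A)) = al*(A*a+1)) by (field; lra). nra. }
  destruct (Hmin l Hl1 Hwbl) as [[Hw1 Hw2] Hm].
  fold bl in Hw2, Hm. set (ws := w l) in *.
  set (c := Rmin c0 1).
  assert (Hc1 : c <= 1) by apply Rmin_r.
  assert (Hc0 : c <= c0) by apply Rmin_l.
  assert (HX : c0 * bl * (32 * (1 + A*a)) < A * K).
  { unfold c0. replace (b * A / (64 * (1 + A * a)) * bl * (32 * (1 + A * a))) with (A * (b*bl) / 2) by (field; nra).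
    nra. }
  assert (Hc0p : 0 <= c0) by (unfold c0; apply Rmult_le_pos; [nra| left; apply Rinv_0_lt_compat; nra]).
  assert (Hz1 : c * bl <= c0 * bl) by nra.
  assert (HP1 : 0 <= c0 * bl) by nra.
  assert (HP2 : 0 <= A * a) by nra.
  assert (HP3 : 0 <= c0 * bl * 32 * (A * a)) by (apply Rmult_le_pos; lra).
  assert (Hz2 : c0 * bl * 32 <= A * K / 32 * 32) by lra.
  assert (Hz3 : c0 * bl * 32 < al).
  { assert ((c0 * bl * 32 - al) * (1 + A*a) < 0) by lra.
    destruct (Rle_or_lt al (c0*bl*32)); auto.
    assert (0 <= (c0 * bl * 32 - al) * (1 + A*a)) by (apply Rmult_le_pos; lra). lra. }
  destruct (Rle_or_lt (c*bl) ws) as [Hcase|Hcase].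
  - right. split; lra.
  - left. destruct (Req_dec ws wbar) as [E|E]; auto.
    exfalso.
    apply (core Al B al K wbar (c*bl) ws); try lra.
    + intros v Hv. apply (h2neg Al B al K v A); lra.
    + apply Hm; lra.
    + assert (c*bl <= bl) by nra. apply Hm; fold bl; lra.
Qed.
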